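(* Let $n,a,b$ be positive integers with $a<b$. Then $$\int_{a\pi/n}^{b\pi/n}\frac{\sin^2(nt)}{t}\,dt\ \ge\ \frac1{12}\sum_{i=a}^b\frac1i.$$ *)

(* Defs.v *)
From Stdlib Require Import Reals Lra Lia.
From Coquelicot Require Import Coquelicot.

(* Main.v *)
Require Import Defs.
From Stdlib Require Import Reals Lra Lia.
From Coquelicot Require Import Coquelicot.
Open Scope R_scope.

Section S.
Variable n : nat.
Hypothesis hn : (0 < n)%nat.
Local Notation f := (fun t => (sin (INR n * t)) ^ 2 / t).

Lemma INRn_pos : 0 < INR n.
Proof. apply lt_0_INR; lia. Qed.

Lemma f_ex c d : 0 < c <= d -> ex_RInt f c d.
Proof.
  intros H. apply (ex_RInt_continuous (V:=R_CompleteNormedModule)). intros z Hz.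
  rewrite Rmin_left in Hz by lra. rewrite Rmax_right in Hz by lra.
  apply (ex_derive_continuous (K:=R_AbsRing) (V:=R_NormedModule)). auto_derive. lra.
Qed.

Lemma piece k : (0 < k)%nat ->
  RInt f (INR k * PI / INR n) (INR (S k) * PI / INR n) >= / (2 * INR (S k)).
Proof.
  intros hk. pose proof INRn_pos. pose proof PI_RGT_0.
  assert (Hk : 0 < INR k) by (apply lt_0_INR; lia).
  rewrite S_INR.
  set (c := INR k * PI / INR n). set (d := (INR k + 1) * PI / INR n).
  assert (Hc : 0 < c) by (unfold c; apply Rdiv_lt_0_compat; nra).
  assert (Hcd : c < d) by (unfold c, d; apply Rmult_lt_compat_r;
     [apply Rinv_0_lt_compat; lra| nra]).
  set (g := fun t => (sin (INR n * t)) ^ 2 / d).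
  set (G := fun t => (t / 2 - sin (2 * INR n * t) / (4 * INR n)) / d).
  assert (HG : is_RInt g c d (minus (G d) (G c))).
  { apply (is_RInt_derive (V:=R_CompleteNormedModule)).
    - intros x _. unfold G, g. auto_derive; [exact I|].
      replace (sin (INR n * x) ^ 2) with ((1 - cos (2 * (INR n * x)))/2).
      2:{ rewrite cos_2a_sin. field. }
      replace (2 * INR n * x) with (2 * (INR n * x)) by ring.
      field. lra.
    - intros x _. apply (ex_derive_continuous (K:=R_AbsRing) (V:=R_NormedModule)). unfold g. auto_derive. lra. }
  assert (Hval : minus (G d) (G c) = / (2 * (INR k + 1))).
  { unfold minus, plus, opp; simpl. unfold G.
    assert (Hs : sin (2 * INR n * d) = sin (2 * INR n * c)).
    { replace (2 * INR n * d) with (2 * INR n * c + 2 * INR 1 * PI).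
      apply sin_period. unfold c, d; simpl. field. lra. }
    rewrite Hs. unfold c, d. field. lra. }
  assert (Hle : RInt g c d <= RInt f c d).
  { apply RInt_le. lra. exists (minus (G d) (G c)); exact HG.
    apply f_ex; lra.
    intros x Hx. unfold g. unfold Rdiv. apply Rmult_le_compat_l.
    apply pow2_ge_0. apply Rinv_le_contravar; lra. }
  rewrite (is_RInt_unique _ _ _ _ HG), Hval in Hle. lra.
Qed.

End S.

Theorem lemma5p7 (n a b : nat) (hn : (0 < n)%nat) (ha : (0 < a)%nat) (hab : (a < b)%nat) :
  RInt (fun t => (sin (INR n * t)) ^ 2 / t) (INR a * PI / INR n) (INR b * PI / INR n)
  >= / 12 * sum_n_m (fun i => / INR i) a b.
Proof.
  pose proof (INRn_pos n hn) as Hn. pose proof PI_RGT_0.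
  assert (Ha : 0 < INR a) by (apply lt_0_INR; lia).
  assert (Main : forall m, (0 < m)%nat ->
    RInt (fun t => (sin (INR n * t)) ^ 2 / t) (INR a * PI / INR n) (INR (a + m) * PI / INR n)
      >= / 2 * sum_n_m (fun i => / INR i) (S a) (a + m)
    /\ sum_n_m (fun i => / INR i) (S a) (a + m) >= / INR (S a)).
  { induction m as [|m IH]; intros Hm; [lia|].
    destruct m as [|m].
    - replace (a + 1)%nat with (S a) by lia. rewrite sum_n_n.
      pose proof (piece n hn a ha). split; [|lra].
      replace (/ 2 * / INR (S a)) with (/ (2 * INR (S a))). lra.
      rewrite Rinv_mult. auto.
    - destruct (IH ltac:(lia)) as [I1 I2].
      replace (a + S (S m))%nat with (S (a + S m)) by lia.
      rewrite sum_n_Sm by lia. unfold plus; cbn -[INR sum_n_m RInt pow].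
      assert (Hp : 0 < / INR (S (a + S m))) by (apply Rinv_0_lt_compat, lt_0_INR; lia).
      split; [|lra].
      assert (Hcs : 0 < INR (a + S m) * PI / INR n).
      { apply Rdiv_lt_0_compat; [|lra]. apply Rmult_lt_0_compat; [apply lt_0_INR; lia|lra]. }
      rewrite <- (RInt_Chasles _ _ (INR (a + S m) * PI / INR n)).
      2:{ apply f_ex. split. apply Rdiv_lt_0_compat; nra.
          unfold Rdiv. apply Rmult_le_compat_r. left; apply Rinv_0_lt_compat; lra.
          apply Rmult_le_compat_r. lra. apply le_INR; lia. }
      2:{ apply f_ex. split. auto.
          unfold Rdiv. apply Rmult_le_compat_r. left; apply Rinv_0_lt_compat; lra.
          apply Rmult_le_compat_r. lra. apply le_INR; lia. }
      pose proof (piece n hn (a + S m) ltac:(lia)) as P.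
      unfold plus; cbn -[INR sum_n_m RInt pow].
      replace (/ (2 * INR (S (a + S m)))) with (/2 * / INR (S (a + S m))) in P
        by (rewrite Rinv_mult; auto).
      lra. }
  destruct (Main (b - a)%nat ltac:(lia)) as [I1 I2].
  replace (a + (b - a))%nat with b in I1, I2 by lia.
  rewrite sum_Sn_m by lia. unfold plus; cbn -[INR sum_n_m RInt pow].
  assert (/ INR a <= 2 * / INR (S a)).
  { rewrite S_INR. apply (Rmult_le_reg_l (INR a * (INR a + 1))). nra.
    field_simplify; try lra. assert (1 <= INR a) by (apply (le_INR 1); lia). lra. }
  set (Sm := sum_n_m (fun i : nat => / INR i) (S a) b) in *. set (Ia := / INR a) in *. set (Is := / INR (S a)) in *. assert (0 < Is) by (apply Rinv_0_lt_compat, lt_0_INR; lia). lra.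
Qed.
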